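(* Let $(\mathcal{A},m,f)$ be a presheaf of commutative $k$-algebras on a small category $\mathcal{U}$, so that $\bar{\mathbf{C}}'_{\mathrm{GS}}(\mathcal{A})=\bar{\mathbf{C}}'_{\mathrm{tGS}}(\mathcal{A})\oplus\mathbf{C}'_{\mathrm{simp}}(\mathcal{A})$. Let $((m_1,f_1),c_1)\in Z^2\bar{\mathbf{C}}'_{\mathrm{GS}}(\mathcal{A})$, with corresponding first order twisted deformation $\bar{\mathcal{A}}=(\mathcal{A}[\epsilon],m+m_1\epsilon,f+f_1\epsilon,1+c_1\epsilon)$. Then $\bar{\mathcal{A}}$ is a twisted presheaf with central twists, and its underlying presheaf $\underline{\bar{\mathcal{A}}}=(\mathcal{A}[\epsilon],m+m_1\epsilon,f+f_1\epsilon)$ is the first order presheaf deformation corresponding to $(m_1,f_1)\in Z^2\bar{\mathbf{C}}'_{\mathrm{tGS}}(\mathcal{A})$.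
   Context: $k$ is a commutative ring, $k[\epsilon]=k[\epsilon]/(\epsilon^2)$. $\mathbf{C}_{\mathrm{GS}}(\mathcal{A})$ is the Gerstenhaber–Schack complex: total complex of $\mathbf{C}^{p,q}(\mathcal{A})=\prod_{\sigma\in\mathcal{N}_p(\mathcal{U})}\mathrm{Hom}_k(\mathcal{A}(c\sigma)^{\otimes q},\mathcal{A}(d\sigma))$ (product over $p$-simplices $\sigma=(d\sigma=U_0\to\cdots\to U_p=c\sigma)$ of the nerve) with componentwise Hochschild and simplicial differentials, $d_{\mathrm{GS}}=(-1)^{n+1}d_{\mathrm{simp}}+d_{\mathrm{Hoch}}$ in degree $n$. $\bar{\mathbf{C}}'$ denotes normalized (vanishing when an argument is $1$) and reduced (vanishing on degenerate simplices) cochains; $\mathbf{C}_{\mathrm{tGS}}$ is the part with $q\ge1$ and $\mathbf{C}_{\mathrm{simp}}$ the row $q=0$. A degree 2 cochain is written $(m_1,f_1,c_1)\in\mathbf{C}^{0,2}\oplus\mathbf{C}^{1,1}\oplus\mathbf{C}^{2,0}$. A twisted presheaf $(\mathcal{A},m,f,c)$ consists of algebras, algebra maps $u^*=f^u$ ($f^{1_U}=1$) and invertible $c^{u,v}\in\mathcal{A}(W)$ ($v\colon W\to V,u\colon V\to U$) with $c^{u,v}v^*u^*(a)=(uv)^*(a)c^{u,v}$, $c^{u,vw}c^{v,w}=c^{uv,w}w^*(c^{u,v})$, $c^{u,1}=c^{1,u}=1$; it has central twists if all $c^{u,v}$ are central, and then its underlying presheaf is $(\mathcal{A},m,f)$.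 A normalized reduced 2-cocycle $(m_1,f_1,c_1)$ determines the first order twisted deformation $(\mathcal{A}[\epsilon],m+m_1\epsilon,f+f_1\epsilon,1+c_1\epsilon)$ (a twisted presheaf of $k[\epsilon]$-algebras); when $c_1=0$ it is a presheaf deformation. *)

(* Defs.v *)
From HB Require Import structures.
From mathcomp Require Import all_boot all_algebra.
Set Implicit Arguments. Unset Strict Implicit. Unset Printing Implicit Defensive.
Import GRing.Theory.
Local Open Scope ring_scope.

(* A small category.  [Mor V U] is the type of arrows V -> U;
   [comp u v] (u : V -> U, v : W -> V) is the composite uv : W -> U. *)
Record smallcat := SmallCat {
  Ob : Type;
  Mor : Ob -> Ob -> Type;
  idm : forall U, Mor U U;
  comp : forall U V W, Mor V U -> Mor W V -> Mor W U;
  comp1m : forall U V (u : Mor V U), comp (idm U) u = u;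
  compm1 : forall U V (u : Mor V U), comp u (idm V) = u;
  compA : forall U V W X (u : Mor V U) (v : Mor W V) (w : Mor X W),
      comp u (comp v w) = comp (comp u v) w }.
Arguments idm {s} U.
Arguments comp {s U V W} u v.

Section Alg.
Variable k : comPzRingType.

Definition is_algebra (M : lmodType k) (mul : M -> M -> M) (one : M) : Prop :=
  ((associative mul) /\
     (left_id one mul) /\
     (right_id one mul) /\
     ((forall a x y z, mul (a *: x + y) z = a *: mul x z + mul y z)) /\
     ((forall a x y z, mul z (a *: x + y) = a *: mul z x + mul z y))).

Definition is_klinear (M N : lmodType k) (g : M -> N) : Prop :=
  forall a x y, g (a *: x + y) = a *: g x + g y.

Definition is_alg_map (M N : lmodType k) (mulM : M -> M -> M) (oneM : M)
    (mulN : N -> N -> N) (oneN : N) (g : M -> N) : Prop :=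
  ((is_klinear g) /\
     ((forall x y, g (mulM x y) = mulN (g x) (g y))) /\
     (g oneM = oneN)).

Definition is_invertible (M : lmodType k) (mul : M -> M -> M) (one : M) (c : M) :=
  exists d, mul c d = one /\ mul d c = one.
End Alg.

Section Presheaves.
Variables (C : smallcat) (k : comPzRingType) (B : Ob C -> lmodType k).

(* data (B, m, f) of a presheaf: f U V u = u^* : B U -> B V for u : V -> U *)
Record psh_data := PshData {
  pmul : forall U, B U -> B U -> B U;
  pone : forall U, B U;
  pmap : forall U V, Mor V U -> B U -> B V }.

(* data (B, m, f, c) of a twisted presheaf; ttw u v = c^{u,v} in B W *)
Record tw_data := TwData {
  tmul : forall U, B U -> B U -> B U;
  tone : forall U, B U;
  tmap : forall U V, Mor V U -> B U -> B V;
  ttw : forall U V W, Mor V U -> Mor W V -> B W }.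
Arguments pmul p U : clear implicits. Arguments pone p U : clear implicits. Arguments tmul t U : clear implicits. Arguments tone t U : clear implicits.

Definition is_presheaf (P : psh_data) : Prop :=
  (((forall U, is_algebra (pmul P U) (pone P U))) /\
     ((forall U V (u : Mor V U),
          is_alg_map (pmul P U) (pone P U) (pmul P V) (pone P V) (pmap P u))) /\
     ((forall U x, pmap P (idm U) x = x)) /\
     ((forall U V W (u : Mor V U) (v : Mor W V) x,
          pmap P (comp u v) x = pmap P v (pmap P u x)))).

Definition is_twisted_presheaf (T : tw_data) : Prop :=
  (((forall U, is_algebra (tmul T U) (tone T U))) /\
     ((forall U V (u : Mor V U),
          is_alg_map (tmul T U) (tone T U) (tmul T V) (tone T V) (tmap T u))) /\
     ((forall U x, tmap T (idm U) x = x)) /\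
     ((forall U V W (u : Mor V U) (v : Mor W V),
          is_invertible (tmul T W) (tone T W) (ttw T u v))) /\
     ((forall U V W (u : Mor V U) (v : Mor W V) a,
          tmul T W (ttw T u v) (tmap T v (tmap T u a))
          = tmul T W (tmap T (comp u v) a) (ttw T u v))) /\
     ((forall U V W X (u : Mor V U) (v : Mor W V) (w : Mor X W),
          tmul T X (ttw T u (comp v w)) (ttw T v w)
          = tmul T X (ttw T (comp u v) w) (tmap T w (ttw T u v)))) /\
     ((forall U V (u : Mor V U), ttw T u (idm V) = tone T V /\ ttw T (idm U) u = tone T V))).

Definition central_twists (T : tw_data) : Prop :=
  forall U V W (u : Mor V U) (v : Mor W V) x,
    tmul T W (ttw T u v) x = tmul T W x (ttw T u v).

(* underlying presheaf data of a twisted presheaf (meaningful with central twists) *)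
Definition underlying (T : tw_data) : psh_data :=
  PshData (tmul T) (tone T) (tmap T).
End Presheaves.
Arguments pmul {C k B} p U. Arguments pone {C k B} p U.
Arguments tmul {C k B} t U. Arguments tone {C k B} t U.

Section GS.
Local Unset Implicit Arguments.
Variables (C : smallcat) (k : comPzRingType) (A : Ob C -> lmodType k).
Variables (m : forall U, A U -> A U -> A U) (one : forall U, A U)
          (f : forall U V, Mor V U -> A U -> A V).
(* a degree 2 cochain (m1, f1, c1) in C^{0,2} + C^{1,1} + C^{2,0};
   c1 U V W u v is the component at the 2-simplex (W -v-> V -u-> U) *)
Variables (m1 : forall U, A U -> A U -> A U)
          (f1 : forall U V, Mor V U -> A U -> A V)
          (c1 : forall U V W, Mor V U -> Mor W V -> A W).

(* normalized (vanishing when an argument is 1) and reduced (vanishing on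
   degenerate simplices) k-multilinear cochains *)
Definition nr_cochain2 : Prop :=
  (((forall U a x y z, m1 U (a *: x + y) z = a *: m1 U x z + m1 U y z)) /\
     ((forall U a x y z, m1 U z (a *: x + y) = a *: m1 U z x + m1 U z y)) /\
     ((forall U V (u : Mor V U), is_klinear (f1 _ _ u))) /\
     ((forall U x, m1 U (one U) x = 0 /\ m1 U x (one U) = 0)) /\
     ((forall U V (u : Mor V U), f1 _ _ u (one U) = 0)) /\
     ((forall U x, f1 _ _ (idm U) x = 0)) /\
     ((forall U V (u : Mor V U), c1 _ _ _ u (idm V) = 0 /\ c1 _ _ _ (idm U) u = 0))).

(* components of d_GS (m1,f1,c1) = (-1)^{2+1} d_simp + d_Hoch *)
Definition dGS03 U (a b c : A U) : A U :=
  m U a (m1 U b c) - m1 U (m U a b) c + m1 U a (m U b c) - m U (m1 U a b) c.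

Definition dsimp_m1 U V (u : Mor V U) (a b : A U) : A V :=
  f _ _ u (m1 U a b) - m1 V (f _ _ u a) (f _ _ u b).
Definition dHoch_f1 U V (u : Mor V U) (a b : A U) : A V :=
  m V (f _ _ u a) (f1 _ _ u b) - f1 _ _ u (m U a b) + m V (f1 _ _ u a) (f _ _ u b).
Definition dGS12 U V (u : Mor V U) (a b : A U) : A V :=
  - dsimp_m1 U V u a b + dHoch_f1 U V u a b.

Definition dsimp_f1 U V W (u : Mor V U) (v : Mor W V) (a : A U) : A W :=
  f _ _ v (f1 _ _ u a) - f1 _ _ (comp u v) a + f1 _ _ v (f _ _ u a).
Definition dHoch_c1 U V W (u : Mor V U) (v : Mor W V) (a : A U) : A W :=
  m W (f _ _ (comp u v) a) (c1 _ _ _ u v) - m W (c1 _ _ _ u v) (f _ _ (comp u v) a).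
Definition dGS21 U V W (u : Mor V U) (v : Mor W V) (a : A U) : A W :=
  - dsimp_f1 U V W u v a + dHoch_c1 U V W u v a.

Definition dsimp_c1 U V W X (u : Mor V U) (v : Mor W V) (w : Mor X W) : A X :=
  f _ _ w (c1 _ _ _ u v) - c1 _ _ _ u (comp v w) + c1 _ _ _ (comp u v) w - c1 _ _ _ v w.
Definition dGS30 U V W X (u : Mor V U) (v : Mor W V) (w : Mor X W) : A X :=
  - dsimp_c1 U V W X u v w.

Definition Z2_GS : Prop :=
  ((nr_cochain2) /\
     ((forall U a b c, dGS03 U a b c = 0)) /\
     ((forall U V (u : Mor V U) a b, dGS12 U V u a b = 0)) /\
     ((forall U V W (u : Mor V U) (v : Mor W V) a, dGS21 U V W u v a = 0)) /\
     ((forall U V W X (u : Mor V U) (v : Mor W V) (w : Mor X W), dGS30 U V W X u v w = 0))).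

(* A[eps] = A + A eps, as pairs (a0, a1) = a0 + a1 eps *)
Definition Aeps (U : Ob C) : lmodType k := (A U * A U)%type.
Definition eps U (x : Aeps U) : Aeps U := (0, x.1).

Definition def_mul U (x y : Aeps U) : Aeps U :=
  (m U x.1 y.1, m U x.1 y.2 + m U x.2 y.1 + m1 U x.1 y.1).
Definition def_one U : Aeps U := (one U, 0).
Definition def_map U V (u : Mor V U) (x : Aeps U) : Aeps V :=
  (f _ _ u x.1, f _ _ u x.2 + f1 _ _ u x.1).
Definition def_tw U V W (u : Mor V U) (v : Mor W V) : Aeps W :=
  (one W, c1 _ _ _ u v).
End GS.

Section Deform.
Local Unset Implicit Arguments.
Variables (C : smallcat) (k : comPzRingType) (A : Ob C -> lmodType k).
Variables (m : forall U, A U -> A U -> A U) (one : forall U, A U)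
          (f : forall U V, Mor V U -> A U -> A V).
Variables (m1 : forall U, A U -> A U -> A U)
          (f1 : forall U V, Mor V U -> A U -> A V)
          (c1 : forall U V W, Mor V U -> Mor W V -> A W).

Definition twisted_deformation : tw_data (Aeps C k A) :=
  TwData (def_mul C k A m m1) (def_one C k A one) (def_map C k A f f1)
         (def_tw C k A one c1).

Definition presheaf_deformation : psh_data (Aeps C k A) :=
  PshData (def_mul C k A m m1) (def_one C k A one) (def_map C k A f f1).

(* (m1, f1) in Z^2 of the normalized reduced tGS complex (the q >= 1 part):
   the GS cocycle condition for the cochain (m1, f1, 0) *)
Definition Z2_tGS : Prop :=
  Z2_GS C k A m one f m1 f1 (fun U V W (_ : Mor V U) (_ : Mor W V) => 0 : A W).
End Deform.

Section Eps.
Variables (C : smallcat) (k : comPzRingType) (A : Ob C -> lmodType k).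
(* k[eps]-linearity of the structure: everything commutes with multiplication by eps *)
Definition eps_compatible_psh (P : psh_data (Aeps C k A)) : Prop :=
  (forall U (x y : Aeps C k A U),
      pmul P U (eps C k A U x) y = eps C k A U (pmul P U x y)
   /\ pmul P U x (eps C k A U y) = eps C k A U (pmul P U x y)) /\
  (forall U V (u : Mor V U) x, pmap P u (eps C k A U x) = eps C k A V (pmap P u x)).
Definition eps_compatible_tw (T : tw_data (Aeps C k A)) : Prop :=
  eps_compatible_psh (underlying T).
End Eps.

(* Main.v *)
Require Import Defs.
From mathcomp Require Import all_boot ssralg.
Import GRing.Theory.
Local Open Scope ring_scope.

Section Lin.
Variables (k : comPzRingType) (M N : lmodType k) (g : M -> N).
Hypothesis Hg : forall a x y, g (a *: x + y) = a *: g x + g y.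
Lemma linD x y : g (x + y) = g x + g y.
Proof. by have := Hg 1 x y; rewrite !scale1r. Qed.
Lemma lin0 : g 0 = 0.
Proof. by apply: (addrI (g 0)); rewrite -linD !addr0. Qed.
Lemma linN x : g (- x) = - g x.
Proof. by apply/eqP; rewrite -addr_eq0 -linD addNr lin0. Qed.
Lemma linB x y : g (x - y) = g x - g y.
Proof. by rewrite linD linN. Qed.
Lemma linZ a x : g (a *: x) = a *: g x.
Proof. by rewrite -[a *: x]addr0 Hg lin0 addr0. Qed.
End Lin.

Arguments linD {k M N g} Hg x y.
Arguments lin0 {k M N g} Hg.
Arguments linN {k M N g} Hg x.
Arguments linB {k M N g} Hg x y.
Arguments linZ {k M N g} Hg a x.

Ltac acstep := match goal with
 | |- ?p + ?t = ?q + ?t => congr (_ + _)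
 | |- ?p + ?t = ?q => rewrite [in q](addrAC _ t)
 end.
Ltac acsolve := rewrite -[LHS]add0r -[RHS]add0r ?opprD ?opprK ?addrA;
  do 60 (try acstep); done.

Ltac cstep := match goal with
 | |- ?p + ?s - ?s = 0 => rewrite addrK
 | |- ?p - ?s + ?s = 0 => rewrite addrNK
 | |- ?p - ?s = 0 => rewrite [in p](addrAC _ s)
 | |- ?p + ?t = 0 => rewrite [in p](addrAC _ (- t))
 end.
Ltac zsolve := apply/eqP; rewrite -subr_eq0; apply/eqP;
  rewrite -[LHS]add0r ?scalerDr ?scalerN ?opprD ?opprK ?addrA;
  do 200 (try cstep); done.
Ltac zsolve_with H := first [ apply/eqP; rewrite -subr_eq0; apply/eqP;
  rewrite -[RHS]H; zsolve | apply/eqP; rewrite eq_sym -subr_eq0; apply/eqP;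
  rewrite -[RHS]H; zsolve].

Theorem proposition2p24 (C : smallcat) (k : comPzRingType) (A : Ob C -> lmodType k)
  (m : forall U, A U -> A U -> A U) (one : forall U, A U)
  (f : forall U V, Mor V U -> A U -> A V)
  (Hpsh : is_presheaf (PshData m one f))
  (Hcomm : forall U, commutative (m U))
  (m1 : forall U, A U -> A U -> A U)
  (f1 : forall U V, Mor V U -> A U -> A V)
  (c1 : forall U V W, Mor V U -> Mor W V -> A W)
  (Hcoc : Z2_GS C k A m one f m1 f1 c1) :
  let Abar := twisted_deformation C k A m one f m1 f1 c1 in
  ((is_twisted_presheaf Abar) /\
     (eps_compatible_tw Abar) /\
     (central_twists Abar) /\
     (Z2_tGS C k A m one f m1 f1) /\
     (underlying Abar = presheaf_deformation C k A m one f m1 f1) /\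
     (is_presheaf (presheaf_deformation C k A m one f m1 f1)) /\
     (eps_compatible_psh (presheaf_deformation C k A m one f m1 f1))).
Proof.
move=> Abar.
case: Hpsh => /= Halg [Hmap [Hid Hcomp]].
case: Hcoc => [[Hm1L [Hm1R [Hf1lin [Hm1one [Hf1one [Hf1id Hc1id]]]]]] [H03 [H12 [H21 H30]]]].
have Hass U : associative (m U) by case: (Halg U).
have Hm1 U : left_id (one U) (m U) by case: (Halg U) => _ [].
have Hm1r U : right_id (one U) (m U) by case: (Halg U) => _ [_ []].
have HmL U z : forall a x y, m U (a *: x + y) z = a *: m U x z + m U y z.
  by case: (Halg U) => _ [_ [_ []]].
have HmR U z : forall a x y, m U z (a *: x + y) = a *: m U z x + m U z y.
  by case: (Halg U) => _ [_ [_ []]].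
have Hflin U V (u : Mor V U) : forall a x y, f _ _ u (a *: x + y) = a *: f _ _ u x + f _ _ u y.
  by case: (Hmap U V u).
have Hfmul U V (u : Mor V U) x y : f _ _ u (m U x y) = m V (f _ _ u x) (f _ _ u y).
  by case: (Hmap U V u) => _ [].
have Hfone U V (u : Mor V U) : f _ _ u (one U) = one V.
  by case: (Hmap U V u) => _ [].
have Hm1L' U z : forall a x y, m1 U (a *: x + y) z = a *: m1 U x z + m1 U y z by move=> *; apply: Hm1L.
have Hm1R' U z : forall a x y, m1 U z (a *: x + y) = a *: m1 U z x + m1 U z y by move=> *; apply: Hm1R.
clear Hmap Halg.

have mDl U x y z : m U (x + y) z = m U x z + m U y z := linD (HmL U z) x y.
have m0l U z : m U 0 z = 0 := lin0 (HmL U z).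
have mNl U x z : m U (- x) z = - m U x z := linN (HmL U z) x.
have mZl U a x z : m U (a *: x) z = a *: m U x z := linZ (HmL U z) a x.
have mDr U x y z : m U z (x + y) = m U z x + m U z y := linD (HmR U z) x y.
have m0r U z : m U z 0 = 0 := lin0 (HmR U z).
have mNr U x z : m U z (- x) = - m U z x := linN (HmR U z) x.
have mZr U a x z : m U z (a *: x) = a *: m U z x := linZ (HmR U z) a x.
have m1Dl U x y z : m1 U (x + y) z = m1 U x z + m1 U y z := linD (Hm1L' U z) x y.
have m10l U z : m1 U 0 z = 0 := lin0 (Hm1L' U z).
have m1Nl U x z : m1 U (- x) z = - m1 U x z := linN (Hm1L' U z) x.
have m1Zl U a x z : m1 U (a *: x) z = a *: m1 U x z := linZ (Hm1L' U z) a x.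
have m1Dr U x y z : m1 U z (x + y) = m1 U z x + m1 U z y := linD (Hm1R' U z) x y.
have m10r U z : m1 U z 0 = 0 := lin0 (Hm1R' U z).
have m1Nr U x z : m1 U z (- x) = - m1 U z x := linN (Hm1R' U z) x.
have m1Zr U a x z : m1 U z (a *: x) = a *: m1 U z x := linZ (Hm1R' U z) a x.
have fD U V (u : Mor V U) x y : f _ _ u (x + y) = f _ _ u x + f _ _ u y := linD (Hflin U V u) x y.
have f0 U V (u : Mor V U) : f _ _ u 0 = 0 := lin0 (Hflin U V u).
have fN U V (u : Mor V U) x : f _ _ u (- x) = - f _ _ u x := linN (Hflin U V u) x.
have fZ U V (u : Mor V U) a x : f _ _ u (a *: x) = a *: f _ _ u x := linZ (Hflin U V u) a x.
have f1D U V (u : Mor V U) x y : f1 _ _ u (x + y) = f1 _ _ u x + f1 _ _ u y := linD (Hf1lin U V u) x y.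
have f10 U V (u : Mor V U) : f1 _ _ u 0 = 0 := lin0 (Hf1lin U V u).
have f1N U V (u : Mor V U) x : f1 _ _ u (- x) = - f1 _ _ u x := linN (Hf1lin U V u) x.
have f1Z U V (u : Mor V U) a x : f1 _ _ u (a *: x) = a *: f1 _ _ u x := linZ (Hf1lin U V u) a x.
have Hsimp U V W (u : Mor V U) (v : Mor W V) a : dsimp_f1 C k A f f1 U V W u v a = 0.
  have := H21 U V W u v a; rewrite /dGS21 /dHoch_c1 Hcomm subrr addr0.
  by move/eqP; rewrite oppr_eq0 => /eqP.
have Hcompf1 U V W (u : Mor V U) (v : Mor W V) a :
    f1 _ _ (Defs.comp u v) a = f _ _ v (f1 _ _ u a) + f1 _ _ v (f _ _ u a).
  have := Hsimp U V W u v a; rewrite /dsimp_f1 => H.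
  apply/eqP; rewrite eq_sym -subr_eq0; apply/eqP; rewrite -H; rewrite -[LHS]add0r -[RHS]add0r ?opprD ?opprK ?addrA; acsolve.
have H03' U a b c := H03 U a b c; rewrite /dGS03 in H03'.
have H12' U V u a b := H12 U V u a b; rewrite /dGS12 /dsimp_m1 /dHoch_f1 in H12'.
have H30' U V W X u v w := H30 U V W X u v w; rewrite /dGS30 /dsimp_c1 in H30'.
have sc1 U a (p : Aeps C k A U) : (a *: p).1 = a *: p.1 by [].
have sc2 U a (p : Aeps C k A U) : (a *: p).2 = a *: p.2 by [].
have ad1 U (p q : Aeps C k A U) : (p + q).1 = p.1 + q.1 by [].
have ad2 U (p q : Aeps C k A U) : (p + q).2 = p.2 + q.2 by [].
have m1one_l U x : m1 U (one U) x = 0 by case: (Hm1one U x).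
have m1one_r U x : m1 U x (one U) = 0 by case: (Hm1one U x).
have Halgdef U : is_algebra (def_mul C k A m m1 U) (def_one C k A one U).
  split; [|split; [|split; [|split]]].
  + move=> [x1 x2] [y1 y2] [z1 z2]; rewrite /def_mul /=; congr (_, _); first by rewrite Hass.
    rewrite !(mDl, mDr, Hass); zsolve_with (H03' U x1 y1 z1).
  + move=> [x1 x2]; rewrite /def_mul /def_one /=; congr (_, _); first by apply: Hm1.
    by rewrite m0l (Hm1one U x1).1 Hm1 !addr0.
  + move=> [x1 x2]; rewrite /def_mul /def_one /=; congr (_, _); first by apply: Hm1r.
    by rewrite m0r (Hm1one U x1).2 Hm1r !addr0 add0r.
  + move=> a [x1 x2] [y1 y2] [z1 z2]; rewrite /def_mul /=; congr (_, _); first by apply: HmL.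
    rewrite !(mDl, mZl, m1Dl, m1Zl) !sc2 /=; zsolve.
  + move=> a [x1 x2] [y1 y2] [z1 z2]; rewrite /def_mul /=; congr (_, _); first by apply: HmR.
    rewrite !(mDr, mZr, m1Dr, m1Zr) !sc2 /=; zsolve.
have Hmapdef U V (u : Mor V U) : is_alg_map (def_mul C k A m m1 U) (def_one C k A one U)
    (def_mul C k A m m1 V) (def_one C k A one V) (def_map C k A f f1 U V u).
  split; [|split].
  + move=> a [x1 x2] [y1 y2]; rewrite /def_map /=; congr (_, _); first by apply: Hflin.
    rewrite !(fD, fZ, f1D, f1Z) !sc2 /=; zsolve.
  + move=> [x1 x2] [y1 y2]; rewrite /def_map /def_mul /=; congr (_, _); first by apply: Hfmul.
    rewrite !(fD, Hfmul, mDl, mDr); zsolve_with (H12' U V u x1 y1).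
  + by rewrite /def_map /def_one /= Hfone Hf1one f0 addr0.
have Hiddef U (x : Aeps C k A U) : def_map C k A f f1 U U (idm U) x = x.
  by case: x => x1 x2; rewrite /def_map /= Hid Hid Hf1id addr0.
have Hcompdef U V W (u : Mor V U) (v : Mor W V) (x : Aeps C k A U) :
    def_map C k A f f1 U W (Defs.comp u v) x
    = def_map C k A f f1 V W v (def_map C k A f f1 U V u x).
  case: x => x1 x2; rewrite /def_map /= Hcomp Hcomp Hcompf1 fD; congr (_, _); zsolve.
have Heps : eps_compatible_psh (presheaf_deformation C k A m one f m1 f1).
  split.
    move=> U [x1 x2] [y1 y2]; rewrite /eps /def_mul /=; split; congr (_, _).
    - by rewrite m0l.
    - by rewrite m0l m10l add0r addr0.
    - by rewrite m0r.
    - by rewrite m0r m10r !addr0.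
  move=> U V u [x1 x2]; rewrite /eps /def_map /=; congr (_, _).
    by rewrite f0.
  by rewrite f10 addr0.
split; [|split; [|split; [|split; [|split; [|split]]]]].
- rewrite /Abar /is_twisted_presheaf /=.
  split; [exact: Halgdef|split; [exact: Hmapdef|split; [exact: Hiddef|split]]].
    move=> U V W u v; exists (one W, - c1 _ _ _ u v); split;
      rewrite /def_mul /def_tw /def_one /=; congr (_, _); rewrite ?Hm1 ?Hm1r ?m1one_l //.
      by rewrite addNr addr0.
    by rewrite addrN addr0.
  split.
    move=> U V W u v [a1 a2]; rewrite /def_mul /def_tw /def_map /=; congr (_, _).
      by rewrite Hm1 Hm1r Hcomp.
    rewrite Hm1 Hm1r m1one_l m1one_r !Hcomp Hcompf1 !fD (Hcomm W (c1 _ _ _ u v)); zsolve.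
  split.
    move=> U V W X u v w; rewrite /def_mul /def_tw /def_map /=; congr (_, _).
      by rewrite Hfone Hm1.
    rewrite Hfone Hf1one !Hm1 !Hm1r !m1one_l !addr0; zsolve_with (H30' U V W X u v w).
  move=> U V u; rewrite /def_tw /def_one; split.
    by rewrite (Hc1id U V u).1.
  by rewrite (Hc1id U V u).2.
- exact: Heps.
- move=> U V W u v [x1 x2]; rewrite /def_mul /def_tw /=; congr (_, _).
    by rewrite Hm1 Hm1r.
  rewrite Hm1 Hm1r m1one_l m1one_r (Hcomm W (c1 _ _ _ u v)) /=; zsolve.
- rewrite /Z2_tGS; split; [|split; [exact: H03|split; [exact: H12|split]]].
    by do 6 (split; first by []).
  move=> U V W u v a; rewrite /dGS21 /dHoch_c1 m0r m0l subrr addr0 Hsimp oppr0 //.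
  move=> U V W X u v w; rewrite /dGS30 /dsimp_c1 f0 subr0 addr0 subr0 oppr0 //.
- by [].
- split; [exact: Halgdef | split; [exact: Hmapdef | split; [exact: Hiddef | exact: Hcompdef]]].
- exact: Heps.
Qed.
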